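(* If a topological space $X$ is crowded and openly irresolvable, then every instance of the McKinsey scheme $\mathrm{M}:\ \Box\Diamond\varphi\to\Diamond\Box\varphi$ is $d$-valid in $X$.
   Context: $d$-semantics: a model on a space $X$ is a valuation of propositional variables by subsets of $X$; truth sets interpret Boolean connectives as set operations, $\Diamond\varphi$ as the derived set (set of limit points: $x$ such that every $O-\{x\}$, $O$ an open neighbourhood of $x$, meets the set) of the truth set of $\varphi$, and $\Box=\neg\Diamond\neg$. A formula is $d$-valid in $X$ if true at every point in every model on $X$. $X$ is crowded if it has no isolated points. A space is resolvable if it has two disjoint non-empty dense subsets, irresolvable otherwise; $X$ is openly irresolvable if every non-empty open subspace is irresolvable. *)

(* Defs.v *)
From HB Require Import structures.
From mathcomp Require Import all_boot all_order.
From mathcomp Require Import boolp classical_sets topology.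
Set Implicit Arguments. Unset Strict Implicit. Unset Printing Implicit Defensive.
Local Open Scope classical_set_scope.

Inductive mform : Type :=
  | MVar : nat -> mform
  | MBot : mform
  | MNeg : mform -> mform
  | MAnd : mform -> mform -> mform
  | MDia : mform -> mform.

Definition MOr (p q : mform) := MNeg (MAnd (MNeg p) (MNeg q)).
Definition MImp (p q : mform) := MOr (MNeg p) q.
Definition MBox (p : mform) := MNeg (MDia (MNeg p)).

Definition derived (X : topologicalType) (A : set X) : set X := limit_point A.

Fixpoint truth (X : topologicalType) (v : nat -> set X) (f : mform) : set X :=
  match f with
  | MVar n => v n
  | MBot => set0
  | MNeg p => ~` truth v p
  | MAnd p q => truth v p `&` truth v q
  | MDia p => derived (truth v p)
  end.

Definition d_valid (X : topologicalType) (f : mform) : Prop :=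
  forall (v : nat -> set X) (x : X), truth v f x.

Definition crowded (X : topologicalType) : Prop :=
  forall x : X, ~ open [set x].

(* A is dense in the subspace Y (subspace topology: opens of Y are O `&` Y) *)
Definition dense_in (X : topologicalType) (Y A : set X) : Prop :=
  forall O : set X, open O -> O `&` Y !=set0 -> O `&` A !=set0.

Definition resolvable_sub (X : topologicalType) (Y : set X) : Prop :=
  exists A B : set X, A `<=` Y /\ B `<=` Y /\ A `&` B = set0 /\
    A !=set0 /\ B !=set0 /\ dense_in Y A /\ dense_in Y B.

Definition openly_irresolvable (X : topologicalType) : Prop :=
  forall U : set X, open U -> U !=set0 -> ~ resolvable_sub U.

(* Main.v *)
Require Import Defs.
From mathcomp Require Import all_boot boolp classical_sets topology.
Local Open Scope classical_set_scope.
Theorem theorem9 (X : topologicalType) :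
  crowded X -> openly_irresolvable X ->
  forall phi : mform, d_valid X (MImp (MBox (MDia phi)) (MDia (MBox phi))).
Proof.
move=> cr oi phi v x /=; rewrite /derived.
set A := truth v phi.
move=> [H1 H2]; apply: H2 => V Vx.
have [U Ux HU] : exists2 U, nbhs x U & forall y, y != x -> U y -> limit_point A y.
  apply: contrapT => nE; apply: H1 => -[]; move=> U Ux.
  apply: contrapT => nex; apply: nE; exists U => // y yx Uy.
  by apply: contrapT => nly; apply: nex; exists y; split.
have : nbhs x (U `&` V) by apply: filterI.
rewrite nbhsE => -[W0 [oW0 W0x] W0UV].
have W0ne : W0 !=set0 by exists x.
have key : forall S, S `<=` W0 -> ~ dense_in W0 S ->
    exists W, [/\ open W, W !=set0, W `<=` W0 & W `&` S = set0].
  move=> S SW0 nD.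
  have [O nO] : exists O, ~ (open O -> O `&` W0 !=set0 -> O `&` S !=set0).
    by apply: contrapT => nE; apply: nD => O; apply: contrapT => nO; apply: nE; exists O.
  have oO : open O by apply: contrapT => nO'; apply: nO => /nO'.
  have OW0 : O `&` W0 !=set0 by apply: contrapT => nO'; apply: nO => _ /nO'.
  exists (O `&` W0); split => //; first exact: openI.
  apply/seteqP; split => // z [[Oz W0z] Sz]; apply: nO => _ _; by exists z.
have emp : forall S, S = set0 -> ~ dense_in W0 S.
  by move=> S -> D; have [z [_ []]] := D W0 oW0 ltac:(by exists x).
have [W [oW Wne WW0 Hdis]] : exists W, [/\ open W, W !=set0, W `<=` W0 &
    (W `&` (W0 `&` A) = set0 \/ W `&` (W0 `&` ~` A) = set0)].
  have [D1|D1] := pselect (dense_in W0 (W0 `&` A)); last first.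
    by have [W [? ? ? ?]] := key _ (@subIsetl _ _ _) D1; exists W; split => //; left.
  have [D2|D2] := pselect (dense_in W0 (W0 `&` ~` A)); last first.
    by have [W [? ? ? ?]] := key _ (@subIsetl _ _ _) D2; exists W; split => //; right.
  exfalso; apply: (oi W0 oW0 W0ne); exists (W0 `&` A), (W0 `&` ~` A).
  split; first exact: subIsetl.
  split; first exact: subIsetl.
  split; first by apply/seteqP; split => // z [[_ ?] [_ ?]].
  split; first by apply/set0P/eqP => /emp; apply.
  split; first by apply/set0P/eqP => /emp; apply.
  by [].
have [y Wy yx] : exists2 y, W y & y != x.
  apply: contrapT => nE; apply: (cr x).
  have [w Ww] := Wne.
  have wx : w = x by apply: contrapT => /eqP wx; apply: nE; exists w.
  suff -> : [set x] = W by [].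
  apply/seteqP; split => z; first by move=> ->; rewrite -wx.
  by move=> Wz; apply: contrapT => /eqP zx; apply: nE; exists z.
have Wnb : nbhs y W by apply: open_nbhs_nbhs.
case: Hdis => Hdis.
  exfalso; have UVy := W0UV y (WW0 y Wy).
  have [z [zy Az Wz]] := HU y yx UVy.1 W Wnb.
  have : (W `&` (W0 `&` A)) z by split=> //; split=> //; apply: WW0.
  by rewrite Hdis.
exists y; split => //; last exact: (W0UV y (WW0 y Wy)).2.
move=> /(_ W Wnb) [z [_ nAz Wz]].
have : (W `&` (W0 `&` ~` A)) z by split=> //; split=> //; apply: WW0.
by rewrite Hdis.
Qed.
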